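(* Let $q\in\mathrm{prob}(\{0,1\}^2)$. The set $C_\le:=\{(\pi_1,\chi^{(2)}_{1|1}-\chi^{(1)}_{1|1}):(\pi,\chi)\in\Theta_2,\ \mu(\pi,\chi)=q,\ \chi^{(1)}_{0|0}\le\chi^{(2)}_{0|0}\}$ is nonempty and equals the set of all $(\mathrm{Pr},\Delta\mathrm{Se})\in[0,1]\times[-1,1]$ satisfying $q_{01}-q_{10}\le\mathrm{Pr}\,\Delta\mathrm{Se}\le\min\{q_{01},\ q_{01}-q_{10}+1-\mathrm{Pr}\}$.
   Context: $\mathrm{prob}(\mathcal{X})$ is the set of probability densities on a finite set $\mathcal{X}$; $\mathrm{markov}(\mathcal{X},\mathcal{Y})$ the set of maps $(x,y)\mapsto p_{y|x}$ with $p_{\cdot|x}\in\mathrm{prob}(\mathcal{Y})$. $\Theta_2:=\mathrm{prob}(\{0,1\})\times\mathrm{markov}(\{0,1\},\{0,1\}^2)$, $\mu(\pi,\chi)_j:=\sum_{i=0}^1\pi_i\chi_{j|i}$ for $j\in\{0,1\}^2$, $\chi^{(1)}_{\iota|i}:=\chi_{\iota0|i}+\chi_{\iota1|i}$, $\chi^{(2)}_{\iota|i}:=\chi_{0\iota|i}+\chi_{1\iota|i}$. *)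

(* Defs.v *)
From mathcomp Require Import all_boot all_order all_algebra.
Set Implicit Arguments. Unset Strict Implicit. Unset Printing Implicit Defensive.
Import Order.TTheory GRing.Theory Num.Theory.
Local Open Scope ring_scope.

Section Defs.
Variable R : realFieldType.

Definition prob (X : finType) (p : X -> R) : Prop :=
  (forall x, 0 <= p x) /\ \sum_(x : X) p x = 1.

(* chi in markov(X,Y): chi x y = chi_{y|x}, each chi x in prob(Y) *)
Definition markov (X Y : finType) (chi : X -> Y -> R) : Prop :=
  forall x, prob (chi x).

(* {0,1} is bool (false = 0, true = 1); {0,1}^2 is bool * bool, (a,b) = "ab" *)
Definition Theta2 (pi : bool -> R) (chi : bool -> bool * bool -> R) : Prop :=
  prob pi /\ markov chi.

Definition mu (pi : bool -> R) (chi : bool -> bool * bool -> R) (j : bool * bool) : R :=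
  \sum_(i : bool) pi i * chi i j.

Definition chi1 (chi : bool -> bool * bool -> R) (i iota : bool) : R :=
  chi i (iota, false) + chi i (iota, true).

Definition chi2 (chi : bool -> bool * bool -> R) (i iota : bool) : R :=
  chi i (false, iota) + chi i (true, iota).

Definition C_le (q : bool * bool -> R) (z : R * R) : Prop :=
  exists (pi : bool -> R) (chi : bool -> bool * bool -> R),
    [/\ Theta2 pi chi, mu pi chi =1 q,
        chi1 chi false false <= chi2 chi false false &
        z = (pi true, chi2 chi true true - chi1 chi true true)].

End Defs.

(* Main.v *)
Require Import Defs.
From mathcomp Require Import all_boot all_order all_algebra.
From mathcomp Require Import ring lra.
Import Order.TTheory GRing.Theory Num.Theory.
Local Open Scope ring_scope.

Lemma sum4 (R : realFieldType) (f : bool * bool -> R) :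
  \sum_(x : bool * bool) f x = f (false,false) + f (false,true) + f (true,false) + f (true,true).
Proof.
rewrite (eq_bigr (fun p => f (p.1,p.2))); last by case.
rewrite -(pair_bigA _ (fun i j => f (i,j))) /=.
rewrite !big_bool /=. lra.
Qed.

Lemma fwd (R : realFieldType) (q : bool * bool -> R) Pr dSe :
  C_le q (Pr, dSe) ->
     [/\ 0 <= Pr <= 1, -1 <= dSe <= 1,
         q (false, true) - q (true, false) <= Pr * dSe &
         Pr * dSe <= Num.min (q (false, true))
                             (q (false, true) - q (true, false) + 1 - Pr)].
Proof.
case=> pi [chi [[[pn ps] mk] hmu hle [-> ->]]].
have [n1 s1] := mk true; have [n0 s0] := mk false.
rewrite sum4 in s1; rewrite sum4 in s0; rewrite big_bool /= in ps.
rewrite -!hmu /mu /chi1 /chi2 !big_bool /=.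
move: hle; rewrite /chi1 /chi2 => hle.
have h0 := pn true; have h0' := pn false.
have := n1 (false,false); have := n1 (false,true); have := n1 (true,false); have := n1 (true,true).
have := n0 (false,false); have := n0 (false,true); have := n0 (true,false); have := n0 (true,true).
move=> a1 a2 a3 a4 b1 b2 b3 b4.
have e1 : 0 <= chi false (true, false) - chi false (false, true) by lra.
have e2 : 0 <= 1 - chi false (true, false) by lra.
have m1 := mulr_ge0 h0' e1.
have m2 := mulr_ge0 h0' e2.
have m3 := mulr_ge0 h0' a3.
have m4 := mulr_ge0 h0 b2.
have m5 := mulr_ge0 h0 b3.
split.
- apply/andP; split; lra.
- apply/andP; split; lra.
- nra.
- rewrite le_min; apply/andP; split; nra.
Qed.

Lemma ex_between (R : realFieldType) (l1 l2 l3 u1 u2 u3 : R) :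
  l1 <= u1 -> l1 <= u2 -> l1 <= u3 ->
  l2 <= u1 -> l2 <= u2 -> l2 <= u3 ->
  l3 <= u1 -> l3 <= u2 -> l3 <= u3 ->
  exists x, [/\ l1 <= x, l2 <= x & l3 <= x] /\ [/\ x <= u1, x <= u2 & x <= u3].
Proof.
move=> *; exists (Num.max l1 (Num.max l2 l3)).
by split; split; rewrite ?le_max ?ge_max; repeat (apply/andP; split); rewrite ?lexx ?orbT.
Qed.

Lemma construct (R : realFieldType) (q : bool * bool -> R) (P D : R)
  (b : bool * bool -> R) :
  prob q -> 0 <= P <= 1 -> -1 <= D <= 1 ->
  (forall j, 0 <= b j <= q j) ->
  b (false,false) + b (false,true) + b (true,false) + b (true,true) = P ->
  b (false,true) - b (true,false) = P * D ->
  q (false,true) - b (false,true) <= q (true,false) - b (true,false) ->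
  C_le q (P, D).
Proof.
move=> [qn qs] /andP[P0 P1] /andP[D0 D1] hb hs hd hl.
rewrite sum4 in qs.
pose d1 (j : bool * bool) : R := match j with
  | (false,true) => (1 + D) / 2 | (true,false) => (1 - D) / 2 | _ => 0 end.
pose d0 (j : bool * bool) : R := match j with (false,false) => 1 | _ => 0 end.
exists (fun i => if i then P else 1 - P).
exists (fun i j => if i then (if P == 0 then d1 j else b j / P)
                   else (if P == 1 then d0 j else (q j - b j) / (1 - P))).
have B := fun j => hb j.
have := B (false,false); have := B (false,true); have := B (true,false); have := B (true,true).
move=> /andP[a1 a1'] /andP[a2 a2'] /andP[a3 a3'] /andP[a4 a4'].
split.
- split.
  + split; first by case => /=; lra.
    by rewrite big_bool /=; lra.
  + case; split.
    * move=> j; have [Pe|Pn] := eqVneq P 0.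
        by case: j => -[] -[] /=; lra.
      by rewrite divr_ge0 //; have := hb j => /andP[].
    * rewrite sum4; have [Pe|Pn] := eqVneq P 0.
        by rewrite /=; lra.
      by rewrite /= -!mulrDl hs divff.
    * move=> j; have [Pe|Pn] := eqVneq P 1.
        by case: j => -[] -[] /=; lra.
      rewrite divr_ge0 //; last by lra.
      by have := hb j => /andP[]; lra.
    * rewrite sum4; have [Pe|Pn] := eqVneq P 1.
        by rewrite /=; lra.
      rewrite /= -!mulrDl.
      have -> : q (false, false) - b (false, false) + (q (false, true) - b (false, true)) +
        (q (true, false) - b (true, false)) + (q (true, true) - b (true, true)) = 1 - P by lra.
      by rewrite divff // subr_eq0 eq_sym.
- move=> j; rewrite /mu big_bool /=.
  have [e0|Pn0] := eqVneq P 0; have [e1|Pn1] := eqVneq P 1.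
  + lra.
  + rewrite e0 mul0r add0r subr0 mul1r.
    by case: j => -[] -[] /=; rewrite divr1; lra.
  + rewrite e1 subrr mul0r addr0.
    by case: j => -[] -[] /=; rewrite ?divr1 ?mul1r; lra.
  + have Pn' : 1 - P != 0 by rewrite subr_eq0 eq_sym.
    by case: j => -[] -[] /=; field; rewrite Pn' Pn0.
- rewrite /chi1 /chi2 /=.
  have [Pe|Pn] := eqVneq P 1; first by rewrite /=; lra.
  rewrite lerD2l; apply: ler_wpM2r; last by [].
  by rewrite invr_ge0; lra.
- rewrite /chi1 /chi2 /=; congr pair.
  have [Pe|Pn] := eqVneq P 0; first by rewrite /=; field.
  rewrite -[X in X = _](mulKf Pn D) -hd; field.
  exact: Pn.
Qed.

Lemma bwd (R : realFieldType) (q : bool * bool -> R) Pr dSe :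
  prob q ->
     [/\ 0 <= Pr <= 1, -1 <= dSe <= 1,
         q (false, true) - q (true, false) <= Pr * dSe &
         Pr * dSe <= Num.min (q (false, true))
                             (q (false, true) - q (true, false) + 1 - Pr)] ->
  C_le q (Pr, dSe).
Proof.
move=> hq [hP hD hlo]; rewrite le_min => /andP[hu1 hu2].
have [qn qs] := hq; rewrite sum4 in qs.
have := qn (false,false); have := qn (false,true); have := qn (true,false); have := qn (true,true).
move=> n11 n10 n01 n00.
move: (hP) (hD) => /andP[P0 P1] /andP[D0 D1].
set t := Pr * dSe in hlo hu1 hu2.
have ht1 : t <= Pr by rewrite /t; nra.
have ht2 : - Pr <= t by rewrite /t; nra.
have [x [[l1 l2 l3] [u1 u2 u3]]] := @ex_between R 0 (- t)
   ((Pr - 1 + q (false,true) + q (true,false) - t) / 2)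
   (q (true,false)) (q (false,true) - t) ((Pr - t) / 2)
   ltac:(lra) ltac:(lra) ltac:(lra) ltac:(lra) ltac:(lra) ltac:(lra)
   ltac:(lra) ltac:(lra) ltac:(lra).
pose r := Pr - 2 * x - t.
pose b (j : bool * bool) : R := match j with
  | (false,false) => Num.min r (q (false,false))
  | (false,true) => x + t
  | (true,false) => x
  | (true,true) => r - Num.min r (q (false,false)) end.
apply: (@construct R q Pr dSe b) => //.
- case => -[] -[] /=; rewrite /r; case: (leP (Pr - 2 * x - t) (q (false,false))) => ?; apply/andP; split; lra.
- rewrite /= /r; lra.
- rewrite /= /t; lra.
- rewrite /=; lra.
Qed.

Theorem lemma9 (R : realFieldType) (q : bool * bool -> R) :
  prob q ->
  (exists z : R * R, C_le q z) /\
  (forall Pr dSe : R,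
     C_le q (Pr, dSe) <->
     [/\ 0 <= Pr <= 1, -1 <= dSe <= 1,
         q (false, true) - q (true, false) <= Pr * dSe &
         Pr * dSe <= Num.min (q (false, true))
                             (q (false, true) - q (true, false) + 1 - Pr)]).
Proof.
move=> hq; split; last first.
  move=> Pr dSe; split; first exact: fwd.
  exact: bwd.
have [qn qs] := hq; rewrite sum4 in qs.
have := qn (false,false); have := qn (false,true); have := qn (true,false); have := qn (true,true).
move=> n11 n10 n01 n00.
exists (1, q (false,true) - q (true,false)); apply: bwd => //.
split.
- by rewrite ler01 lexx.
- apply/andP; split; lra.
- lra.
- rewrite le_min; apply/andP; split; lra.
Qed.
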